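(* Let $X$ be a real separable Hilbert space with inner product $(\cdot,\cdot)_X$, let $T>0$, and let $0=t_1<t_2<\cdots<t_{s+1}=T$. Set $\delta_j=t_{j+1}-t_j$ for $j=1,\dots,s$ and $\Delta=\mathrm{diag}(\delta_1,\dots,\delta_s)\in\mathbb{R}^{s\times s}$. Let $\{\phi_k\}_{k=1}^m\subset X$ be linearly independent, let $M\in\mathbb{R}^{m\times m}$ have entries $M_{j,k}=(\phi_j,\phi_k)_X$, and let $U\in\mathbb{R}^{m\times s}$ have entries $U_{k,j}$. Define $u_j=\sum_{k=1}^m U_{k,j}\phi_k\in X$ for $j=1,\dots,s$, and $u\in L^2(0,T;X)$ by $u(t)=\sum_{j=1}^s u_j\chi_j(t)$, where $\chi_j(t)=1$ for $t_j<t<t_{j+1}$ and $\chi_j(t)=0$ otherwise. Let $K:L^2(0,T)\to X$ be the POD operator $Kf=\int_0^T u(t)f(t)\,dt$. Then $\{\sigma_i,w_i,v_i\}\subset\mathbb{R}\times\mathbb{R}^s_\Delta\times\mathbb{R}^m_M$ are the core singular values and singular vectors of the matrix $U\Delta:\mathbb{R}^s_\Delta\to\mathbb{R}^m_M$ if and only if $\{\sigma_i,f_i,x_i\}\subset\mathbb{R}\times L^2(0,T)\times X$ are the core singular values and singular vectors of $K:L^2(0,T)\to X$, where for all $i$ the vectors $v_i=(v_{i,1},\dots,v_{i,m})$ and $x_i$ are related by $$x_i=\sum_{k=1}^m v_{i,k}\phi_k,$$ and $w_i=(w_{i,1},\dots,w_{i,s})$ and $f_i$ are related by $$w_{i,j}=\int_0^T\delta_j^{-1}\chi_j(t)f_i(t)\,dt,\qquad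 f_i(t)=\sum_{\ell=1}^s w_{i,\ell}\chi_\ell(t).$$
   Context: For a symmetric positive definite matrix $M\in\mathbb{R}^{m\times m}$, $\mathbb{R}^m_M$ denotes $\mathbb{R}^m$ with inner product $(x,y)_M=y^TMx$; similarly $\mathbb{R}^s_\Delta$. $\mathbb{R}^k$ without subscript carries the standard inner product. For a compact linear operator $A:\mathcal{X}\to\mathcal{Y}$ between separable Hilbert spaces with Hilbert adjoint $A^*$, the core singular values and singular vectors are the positive singular values $\sigma_1\ge\sigma_2\ge\cdots>0$ (square roots of the positive eigenvalues of $A^*A$, equivalently of $AA^*$), together with orthonormal families $\{\xi_i\}\subset\mathcal{X}$ (eigenvectors of $A^*A$) and $\{\eta_i\}\subset\mathcal{Y}$ (eigenvectors of $AA^*$) satisfying $A\xi_i=\sigma_i\eta_i$ and $A^*\eta_i=\sigma_i\xi_i$ for all $i$; in the triples above, the first vector lies in the domain and the second in the codomain. For a matrix $A:\mathbb{R}^s_\Delta\to\mathbb{R}^m_M$, the adjoint is $A^*=\Delta^{-1}A^TM$. The adjoint of $K$ is $(K^*x)(t)=(x,u(t))_X$. *)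

(* Defs.v *)
From HB Require Import structures.
From mathcomp Require Import all_boot all_order all_algebra.
From mathcomp Require Import all_classical all_reals all_analysis.
Set Implicit Arguments. Unset Strict Implicit. Unset Printing Implicit Defensive.
Import Order.TTheory GRing.Theory Num.Theory.
Local Open Scope classical_set_scope.
Local Open Scope ring_scope.

Section Defs.
Variable R : realType.

Section Hilbert.
Variable X : lmodType R.
Variable ip : X -> X -> R.

Definition ip_norm (x : X) : R := Num.sqrt (ip x x).

Definition is_real_inner_product : Prop :=
  [/\ forall x y, ip x y = ip y x,
      forall a x y z, ip (a *: x + y) z = a * ip x z + ip y z,
      forall x, 0 <= ip x x
    & forall x, ip x x = 0 -> x = 0].

Definition ip_complete : Prop :=
  forall a : nat -> X,
    (forall e, 0 < e -> exists N, forall n k, (N <= n)%N -> (N <= k)%N ->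
        ip_norm (a n - a k) < e) ->
    exists l : X, forall e, 0 < e -> exists N, forall n, (N <= n)%N ->
        ip_norm (a n - l) < e.

Definition ip_separable : Prop :=
  exists d : nat -> X, forall x e, 0 < e -> exists n, ip_norm (x - d n) < e.

Definition is_real_separable_hilbert : Prop :=
  [/\ is_real_inner_product, ip_complete & ip_separable].

Definition lin_indep (m : nat) (phi : 'I_m -> X) : Prop :=
  forall c : 'I_m -> R, \sum_(k < m) c k *: phi k = 0 -> forall k, c k = 0.
End Hilbert.

Definition L2 (T : R) (f : R -> R) : Prop :=
  measurable_fun `]0, T[%classic f /\
  (@lebesgue_measure R).-integrable `]0, T[%classic (fun t => (f t ^+ 2)%:E).

Definition L2ip (T : R) (f g : R -> R) : \bar R :=
  let D := `]0, T[%classic in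
  (\int[@lebesgue_measure R]_(t in D) (f t * g t)%:E)%E.

(* grid t_1 < ... < t_{s+1} is stored 0-based: tt 0 = 0, ..., tt s = T *)
Definition delta (tt : nat -> R) (j : nat) : R := tt j.+1 - tt j.

Definition chi (tt : nat -> R) (j : nat) (t : R) : R :=
  if (tt j < t) && (t < tt j.+1) then 1 else 0.

Definition Delta (tt : nat -> R) (s : nat) : 'M[R]_s :=
  diag_mx (\row_(j < s) delta tt j).

Definition pod_u (X : lmodType R) (m s : nat) (phi : 'I_m -> X) (U : 'M[R]_(m, s))
  (tt : nat -> R) (t : R) : X :=
  \sum_(j < s) chi tt j t *: (\sum_(k < m) U k j *: phi k).

Definition ip_mx (n : nat) (D : 'M[R]_n) (x y : 'cV[R]_n) : R := (y^T *m D *m x) 0 0.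

(* Hilbert adjoint of A : R^s_D -> R^m_M *)
Definition mx_adj (m s : nat) (M : 'M[R]_m) (D : 'M[R]_s) (A : 'M[R]_(m, s))
  : 'M[R]_(s, m) := invmx D *m A^T *m M.

Definition core_svd_mx (m s : nat) (M : 'M[R]_m) (D : 'M[R]_s) (A : 'M[R]_(m, s))
  (r : nat) (sigma : 'I_r -> R) (w : 'I_r -> 'cV[R]_s) (v : 'I_r -> 'cV[R]_m) : Prop :=
  [/\ forall i, 0 < sigma i,
      forall i j : 'I_r, (i <= j)%N -> sigma j <= sigma i
    & forall i j, ip_mx D (w i) (w j) = (i == j)%:R] /\
  [/\ forall i j, ip_mx M (v i) (v j) = (i == j)%:R,
      forall i, A *m w i = sigma i *: v i,
      forall i, mx_adj M D A *m v i = sigma i *: w i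
    & forall y : 'cV[R]_s, (forall i, ip_mx D y (w i) = 0) -> A *m y = 0].

Definition core_svd_L2X (X : lmodType R) (ip : X -> X -> R) (T : R)
  (K : (R -> R) -> X) (Kstar : X -> R -> R)
  (r : nat) (sigma : 'I_r -> R) (f : 'I_r -> R -> R) (x : 'I_r -> X) : Prop :=
  [/\ forall i, 0 < sigma i,
      forall i j : 'I_r, (i <= j)%N -> sigma j <= sigma i
    & forall i, L2 T (f i)] /\
  [/\
      forall i j, L2ip T (f i) (f j) = ((i == j)%:R)%:E,
      forall i j, ip (x i) (x j) = (i == j)%:R,
      forall i, K (f i) = sigma i *: x i,
      forall i, {ae @lebesgue_measure R, forall t, `]0, T[%classic t ->
                   Kstar (x i) t = sigma i * f i t}
    & forall g, L2 T g -> (forall i, L2ip T g (f i) = 0%E) -> K g = 0].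

End Defs.

(* Main.v *)
Require Import Defs.
From HB Require Import structures.
From mathcomp Require Import all_boot all_order all_algebra.
From mathcomp Require Import all_classical all_reals all_analysis.
From mathcomp Require Import ring lra.
Import Order.TTheory GRing.Theory Num.Theory.
Local Open Scope classical_set_scope.
Local Open Scope ring_scope.

Section Grid.
Variable R : realType.
Variables (T : R) (s : nat) (tt : nat -> R).
Hypotheses (ht0 : tt 0%N = 0) (htT : tt s = T)
  (htinc : forall j, (j < s)%N -> tt j < tt j.+1).
Notation mu := (@lebesgue_measure R).
Notation D := (`]0, T[%classic : set R).

Lemma tt_le i j : (i <= j <= s)%N -> tt i <= tt j.
Proof.
move=> /andP[]; elim: j => [|j IH]; first by rewrite leqn0 => /eqP->.
rewrite leq_eqVlt => /orP[/eqP->//|]; rewrite ltnS => ij js.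
apply: le_trans (IH ij (ltnW js)) _; exact/ltW/htinc.
Qed.

Lemma chiE j : chi tt j = \1_(`]tt j, tt j.+1[%classic) :> (R -> R).
Proof.
apply/funext => t; rewrite /chi indicE.
by case: ifP => h; [rewrite mem_set // | rewrite memNset //]; rewrite /= in_itv /= h.
Qed.

Lemma chi_sub j : (j < s)%N -> `]tt j, tt j.+1[%classic `<=` D.
Proof.
move=> js t /=; rewrite !in_itv /= => /andP[a b]; apply/andP; split.
  by apply: le_lt_trans a; rewrite -ht0; apply: tt_le; rewrite leq0n ltnW.
by apply: lt_le_trans b _; rewrite -htT; apply: tt_le; rewrite js leqnn.
Qed.

Lemma chi01 j t : chi tt j t = 0 \/ chi tt j t = 1.
Proof. by rewrite /chi; case: ifP; auto. Qed.

Lemma chi_prod j l t : (j < s)%N -> (l < s)%N ->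
  chi tt j t * chi tt l t = (j == l)%:R * chi tt j t.
Proof.
move=> js ls; case: (eqVneq j l) => [->|jl]; first by
  rewrite mul1r; case: (chi01 l t) => ->; rewrite ?mul0r ?mul1r.
rewrite mul0r.
wlog jl' : j l js ls jl / (j < l)%N.
  move=> H; case: (ltngtP j l) => h; first exact: H.
  - by rewrite mulrC; apply: H => //; rewrite eq_sym.
  - by move: jl; rewrite h eqxx.
rewrite /chi; case: ifP => [/andP[a b]|]; last by rewrite mul0r.
case: ifP => [/andP[c d]|]; last by rewrite mulr0.
have : tt j.+1 <= tt l by apply: tt_le; rewrite jl' ltnW.
by rewrite leNgt (lt_trans c b).
Qed.

Lemma chi_meas j A : measurable_fun A (chi tt j).
Proof. by rewrite chiE; apply: measurable_realfun.measurable_indic. Qed.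

Lemma chi_int j : (j < s)%N -> mu.-integrable D (EFin \o chi tt j).
Proof.
move=> js; rewrite chiE; apply: (integrableS measurableT) => //.
exact: integrable_indic_itv.
Qed.

Lemma chi_integral j : (j < s)%N ->
  (\int[mu]_(t in D) (chi tt j t)%:E = (delta tt j)%:E)%E.
Proof.
move=> js; rewrite chiE integral_indic //; rewrite setIidl; last exact: chi_sub.
have H := @lebesgue_measure_itv R `]tt j, tt j.+1[.
apply: eq_trans H _.
by rewrite /= lte_fin htinc //= -EFinB.
Qed.


Notation mEFinP := measurable_realfun.measurable_EFinP.
Notation mfunM := measurable_realfun.measurable_funM.

Lemma mD : measurable (D : set (measurableTypeR R)). Proof. exact: measurable_itv. Qed.

Lemma oneD_int : mu.-integrable D (EFin \o \1_D).
Proof.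
have H := @integrable_indic_itv R 0 T false true.
apply: (integrableS measurableT) H => //; exact: mD.
Qed.

Lemma L2_meas g : L2 T g -> measurable_fun D g.
Proof. by case. Qed.

Lemma L2_int g : L2 T g -> mu.-integrable D (EFin \o g).
Proof.
move=> [mg ig].
apply: (@le_integrable _ _ _ mu _ mD _ (fun t => (\1_D t + g t ^+ 2)%:E)) => //.
- exact/mEFinP.
- move=> t Dt /=; rewrite indicE mem_set //= lee_fin.
  have h := sqr_ge0 (`|g t| - 1).
  have h2 : `|g t| ^+ 2 = g t ^+ 2 by rewrite real_normK // num_real.
  have h3 := normr_ge0 (g t).
  rewrite [X in _ <= X]ger0_norm; last by rewrite addr_ge0 // sqr_ge0.
  nra.
- move: (integrableD mD oneD_int ig); apply: eq_integrable => // t _ /=; rewrite EFinD.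
Qed.

Lemma L2_chi_int j g : L2 T g ->
  mu.-integrable D (EFin \o (fun t => chi tt j t * g t)).
Proof.
move=> hg; apply: (@le_integrable _ _ _ mu _ mD _ (EFin \o g)) => //.
- apply/mEFinP; apply: mfunM; [exact: chi_meas | exact: L2_meas].
- move=> t _ /=; rewrite lee_fin normrM.
  by case: (chi01 j t) => ->; rewrite ?normr0 ?normr1 ?mul0r ?mul1r.
- exact: L2_int.
Qed.

Definition ci (g : R -> R) (j : nat) : R :=
  Rintegral mu D (fun t => chi tt j t * g t).

Lemma step_int g (a : 'I_s -> R) : L2 T g ->
  (\int[mu]_(t in D) (((\sum_(l < s) a l * chi tt l t) * g t)%:E)
   = (\sum_(l < s) a l * ci g l)%:E)%E.
Proof.
move=> hg.
under eq_integral => t _ do rewrite mulr_suml -sumEFin.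
have hi : forall l : 'I_s, mu.-integrable D (fun t => (a l * chi tt l t * g t)%:E).
  move=> l; move: (integrableZl mD (a l) (L2_chi_int l g hg)).
  apply: eq_integrable; first exact: mD.
  by move=> t _ /=; rewrite -EFinM mulrA.
rewrite (integral_sum mD hi).
rewrite -sumEFin; apply: eq_bigr => l _.
under eq_integral => t _ do rewrite -mulrA EFinM.
rewrite (integralZl mD (L2_chi_int l g hg)).
rewrite /ci /Rintegral EFinM fineK //.
exact: (integrable_fin_num mD (L2_chi_int l g hg)).
Qed.

Definition step (c : 'I_s -> R) (t : R) := \sum_(l < s) c l * chi tt l t.

Lemma step_meas c A : measurable_fun A (step c).
Proof.
apply: measurable_sum => l; apply: mfunM; [exact: measurable_cst | exact: chi_meas].
Qed.

Lemma step_L2 c : L2 T (step c).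
Proof.
split; first exact: step_meas.
pose C := \sum_(l < s) `|c l|.
apply: (@le_integrable _ _ _ mu _ mD _ (fun t => ((C ^+ 2) * \1_D t)%:E)) => //.
- apply/mEFinP; apply: measurable_realfun.measurable_funX; exact: step_meas.
- move=> t Dt /=; rewrite indicE mem_set //= mulr1 lee_fin.
  have hC : 0 <= C by apply: sumr_ge0 => l _.
  have hb : `|step c t| <= C.
    apply: le_trans (ler_norm_sum _ _ _) _; apply: ler_sum => l _.
    rewrite normrM; case: (chi01 l t) => ->; rewrite ?normr0 ?normr1 ?mulr0 ?mulr1 //.
  rewrite normrX (ger0_norm (sqr_ge0 C)).
  by rewrite lerXn2r // ?nnegrE.
- move: (integrableZl mD (C ^+ 2) oneD_int).
  by apply: eq_integrable; [exact: mD | move=> t _ /=; rewrite EFinM].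
Qed.

Lemma ci_step c (j : 'I_s) : ci (step c) j = c j * delta tt j.
Proof.
have E : forall t, chi tt j t * step c t = c j * chi tt j t.
  move=> t; rewrite /step mulr_sumr (bigD1 j) //= big1 ?addr0.
    by rewrite mulrCA chi_prod // eqxx mul1r.
  by move=> l; rewrite -val_eqE => /negPf lj; rewrite mulrCA chi_prod // eq_sym lj mul0r mulr0.
rewrite /ci (@eq_Rintegral _ _ _ mu _ (fun t => c j * chi tt j t)); last by move=> t _; exact: E.
rewrite (RintegralZl _ mD (chi_int j (ltn_ord j))).
by rewrite /Rintegral chi_integral.
Qed.

Lemma ae_int (g1 g2 h : R -> R) : measurable_fun D g1 -> measurable_fun D g2 ->
  measurable_fun D h ->
  {ae mu, forall t, D t -> g1 t = g2 t} ->
  (\int[mu]_(t in D) ((g1 t * h t)%:E) = \int[mu]_(t in D) ((g2 t * h t)%:E))%E.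
Proof.
move=> m1 m2 mh ae; apply: ae_eq_integral.
- exact: mD.
- by apply/mEFinP; apply: mfunM.
- by apply/mEFinP; apply: mfunM.
- move: ae; apply: (@filterS _ _ (ae_filter_ringOfSetsType mu)) => t H Dt; by rewrite H.
Qed.

Lemma ae_point (P : R -> Prop) (j : nat) : (j < s)%N ->
  {ae mu, forall t, D t -> P t} -> exists t, tt j < t < tt j.+1 /\ P t.
Proof.
move=> js [N [mN N0 sN]].
apply: contrapT => hne.
have sub : `]tt j, tt j.+1[%classic `<=` N.
  move=> t It; apply: sN => /= HP; apply: hne; exists t; split.
    by move: It; rewrite /= in_itv.
  by apply: HP; apply: chi_sub js _ It.
have := le_measure mu (mem_set (measurable_itv _)) (mem_set mN) sub.
move=> Hle.
have N0' : (mu N <= 0)%E by rewrite N0.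
have H := @lebesgue_measure_itv R `]tt j, tt j.+1[.
have I0 : (0 < mu `]tt j, tt j.+1[%classic)%E.
  by rewrite /= in H; rewrite H /= lte_fin htinc //= lte_fin subr_gt0 htinc.
by have := lt_le_trans I0 (le_trans Hle N0'); rewrite ltxx.
Qed.

Lemma step_at c (j : 'I_s) t : tt j < t < tt j.+1 -> step c t = c j.
Proof.
move=> H; have cj : chi tt j t = 1 by rewrite /chi H.
rewrite /step (bigD1 j) //= cj mulr1 big1 ?addr0 // => l.
rewrite -val_eqE => /negPf lj.
have := chi_prod j l t (ltn_ord j) (ltn_ord l).
by rewrite cj mul1r mulr1 eq_sym lj => ->; rewrite mulr0.
Qed.

End Grid.

Section Hilb.
Variables (R : realType) (X : lmodType R) (ip : X -> X -> R).
Hypothesis hip : is_real_inner_product ip.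

Lemma ipC x y : ip x y = ip y x.
Proof. by case: hip. Qed.

Lemma ipDl x y z : ip (x + y) z = ip x z + ip y z.
Proof. by case: hip => _ H _ _; have := H 1 x y z; rewrite scale1r mul1r. Qed.

Lemma ip0l z : ip 0 z = 0.
Proof.
have := ipDl 0 0 z; rewrite addr0 => H.
have : ip 0 z + ip 0 z - ip 0 z = ip 0 z + 0 by rewrite addrK addr0.
by rewrite -H subrr addr0.
Qed.

Lemma ipZl a x z : ip (a *: x) z = a * ip x z.
Proof. by case: hip => _ H _ _; rewrite -[a *: x]addr0 H ip0l addr0. Qed.

Lemma ipBl x y z : ip (x - y) z = ip x z - ip y z.
Proof. by rewrite ipDl -scaleN1r ipZl mulN1r. Qed.

Lemma ip_sum n (F : 'I_n -> X) z : ip (\sum_i F i) z = \sum_i ip (F i) z.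
Proof. by elim/big_rec2: _ => [|i y1 y2 _ <-]; [exact: ip0l | exact: ipDl]. Qed.

Lemma ip_eq0 x : (forall y, ip x y = 0) -> x = 0.
Proof. by case: hip => _ _ _ H Hx; apply: H; apply: Hx. Qed.

End Hilb.

Section Main.
Variables (R : realType) (X : lmodType R) (ip : X -> X -> R).
Hypothesis (HX : is_real_separable_hilbert ip).
Variables (T : R) (s : nat) (tt : nat -> R).
Hypotheses (ht0 : tt 0%N = 0) (htT : tt s = T)
  (htinc : forall j, (j < s)%N -> tt j < tt j.+1).
Variables (m : nat) (phi : 'I_m -> X).
Hypothesis (hphi : lin_indep phi).
Variables (M : 'M[R]_m).
Hypothesis (hM : forall j k, M j k = ip (phi j) (phi k)).
Variables (U : 'M[R]_(m, s)) (K : (R -> R) -> X).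
Hypothesis (hK : forall g, L2 T g -> forall y : X,
          ip (K g) y = Rintegral (@lebesgue_measure R) `]0, T[%classic
                         (fun t => ip (pod_u phi U tt t) y * g t)).
Notation mu := (@lebesgue_measure R).
Notation D := (`]0, T[%classic : set R).
Local Notation stp := (@step R s tt).
Local Notation cci := (@ci R T tt).

Let hip : is_real_inner_product ip. Proof. by case: HX. Qed.

Definition uu (j : 'I_s) : X := \sum_(k < m) U k j *: phi k.

Lemma ip_u_l t y : ip (pod_u phi U tt t) y = stp (fun j => ip (uu j) y) t.
Proof.
rewrite /pod_u (@ip_sum R X ip hip); apply: eq_bigr => j _.
by rewrite (@ipZl R X ip hip) mulrC.
Qed.

Lemma Kform g : L2 T g -> K g = \sum_(j < s) cci g j *: uu j.
Proof.
move=> hg; apply/eqP; rewrite -subr_eq0; apply/eqP; apply: (@ip_eq0 R X ip hip) => y.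
rewrite (@ipBl R X ip hip) hK // (@ip_sum R X ip hip).
under eq_Rintegral => t _ do rewrite ip_u_l.
rewrite /Rintegral step_int //=.
rewrite -sumrB; apply: big1 => j _.
by rewrite (@ipZl R X ip hip) mulrC subrr.
Qed.

Lemma Kform2 g : L2 T g ->
  K g = \sum_(k < m) (\sum_(j < s) U k j * cci g j) *: phi k.
Proof.
move=> hg; rewrite Kform //.
under eq_bigr => j _ do rewrite /uu scaler_sumr.
rewrite exchange_big /=; apply: eq_bigr => k _.
by rewrite scaler_suml; apply: eq_bigr => j _; rewrite scalerA mulrC.
Qed.

Lemma lin_eq (a b : 'I_m -> R) :
  \sum_(k < m) a k *: phi k = \sum_(k < m) b k *: phi k -> forall k, a k = b k.
Proof.
move=> H k; apply/eqP; rewrite -subr_eq0; apply/eqP.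
apply: (hphi (fun k => a k - b k)) => //.
under eq_bigr => i _ do rewrite scalerBl.
by rewrite sumrB H subrr.
Qed.

Lemma ip_mx_D (a b : 'cV[R]_s) :
  ip_mx (Delta tt s) a b = \sum_(l < s) b l 0 * delta tt l * a l 0.
Proof.
rewrite /ip_mx /Delta mul_mx_diag !mxE; apply: eq_bigr => l _.
by rewrite !mxE.
Qed.

Lemma ip_mx_M (a b : 'cV[R]_m) :
  ip_mx M a b = ip (\sum_(k < m) a k 0 *: phi k) (\sum_(k < m) b k 0 *: phi k).
Proof.
rewrite /ip_mx mxE (@ip_sum R X ip hip).
under [RHS]eq_bigr => k _ do rewrite (@ipZl R X ip hip) (@ipC R X ip hip) (@ip_sum R X ip hip).
under [RHS]eq_bigr => k _ do under eq_bigr => l _ do rewrite (@ipZl R X ip hip) (@ipC R X ip hip) -hM.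
apply: eq_bigr => j _; rewrite mxE mulr_suml mulr_sumr; apply: eq_bigr => k _.
by rewrite !mxE !hM (@ipC R X ip hip); ring.
Qed.


Lemma UDw (a : 'cV[R]_s) k :
  ((U *m Delta tt s) *m a) k 0 = \sum_(j < s) U k j * delta tt j * a j 0.
Proof.
rewrite mxE; apply: eq_bigr => j _.
by rewrite /Delta mul_mx_diag !mxE.
Qed.

Lemma adj : mx_adj M (Delta tt s) (U *m Delta tt s) = U^T *m M.
Proof.
rewrite /mx_adj trmx_mul /Delta tr_diag_mx !mulmxA mulVmx ?mul1mx //.
rewrite unitmxE det_diag unitfE; apply: lt0r_neq0; apply: prodr_gt0 => j _.
by rewrite mxE subr_gt0 htinc.
Qed.

Lemma adjv (a : 'cV[R]_m) j :
  ((U^T *m M) *m a) j 0 = ip (uu j) (\sum_(k < m) a k 0 *: phi k).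
Proof.
rewrite mxE /uu (@ip_sum R X ip hip).
under [RHS]eq_bigr => k _ do rewrite (@ipZl R X ip hip) (@ipC R X ip hip) (@ip_sum R X ip hip).
under [LHS]eq_bigr => l _ do rewrite mxE mulr_suml.
rewrite exchange_big /=; apply: eq_bigr => k _.
rewrite mulr_sumr; apply: eq_bigr => l _.
by rewrite !mxE (@ipZl R X ip hip) hM (@ipC R X ip hip); ring.
Qed.

Variables (r : nat) (sigma : 'I_r -> R) (w : 'I_r -> 'cV[R]_s) (v : 'I_r -> 'cV[R]_m)
  (f : 'I_r -> R -> R) (x : 'I_r -> X).
Hypotheses (hf : forall i, L2 T (f i))
  (hxv : forall i, x i = \sum_(k < m) v i k 0 *: phi k)
  (hfw : forall i, {ae @lebesgue_measure R, forall t, `]0, T[%classic t ->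
                     f i t = \sum_(l < s) w i l 0 * chi tt l t}).

Lemma ci_f i (j : 'I_s) : cci (f i) j = w i j 0 * delta tt j.
Proof.
rewrite -(@ci_step R T s tt ht0 htT htinc (fun l => w i l 0) j).
rewrite /ci /Rintegral; congr fine.
under eq_integral => t _ do rewrite mulrC.
rewrite (@ae_int R T (f i) (stp (fun l => w i l 0)) (chi tt j)).
- by under eq_integral => t _ do rewrite mulrC.
- by case: (hf i).
- exact: step_meas.
- exact: chi_meas.
- exact: hfw.
Qed.

Lemma L2ip_f g i : L2 T g ->
  L2ip T g (f i) = (\sum_(l < s) w i l 0 * cci g l)%:E.
Proof.
move=> hg; rewrite /L2ip /=.
under eq_integral => t _ do rewrite mulrC.
rewrite (@ae_int R T (f i) (stp (fun l => w i l 0)) g).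
- exact: step_int.
- by case: (hf i).
- exact: step_meas.
- by case: hg.
- exact: hfw.
Qed.


Lemma dn0 (l : 'I_s) : delta tt l != 0.
Proof. by apply: lt0r_neq0; rewrite subr_gt0 htinc. Qed.

Lemma main_equiv :
  core_svd_mx M (Delta tt s) (U *m Delta tt s) sigma w v <->
  core_svd_L2X ip T K (fun y t => ip y (pod_u phi U tt t)) sigma f x.
Proof.
split.
- case=> [[hs1 hs2 hw] [hv hA hAdj hcomp]].
  split; first by split.
  split.
  + move=> i j; rewrite L2ip_f // -hw ip_mx_D; congr EFin.
    by apply: eq_bigr => l _; rewrite ci_f; ring.
  + by move=> i j; rewrite !hxv -ip_mx_M; exact: hv.
  + move=> i; rewrite Kform2 // hxv scaler_sumr; apply: eq_bigr => k _.
    rewrite scalerA; congr (_ *: _).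
    have := congr1 (fun A : 'cV[R]_m => A k 0) (hA i); rewrite /= UDw mxE => <-.
    by apply: eq_bigr => j _; rewrite ci_f; ring.
  + move=> i.
    have hj : forall j : 'I_s, ip (uu j) (x i) = sigma i * w i j 0.
      by move=> j; rewrite hxv -adjv -adj hAdj mxE.
    move: (hfw i); apply: (@filterS _ _ (ae_filter_ringOfSetsType mu)) => t H Dt /=.
    rewrite (@ipC R X ip hip) ip_u_l H // /step mulr_sumr; apply: eq_bigr => j _.
    by rewrite hj; ring.
  + move=> g hg hortho; rewrite Kform2 //.
    pose y : 'cV[R]_s := \col_j (cci g j / delta tt j).
    have hy : (U *m Delta tt s) *m y = 0.
      apply: hcomp => i; rewrite ip_mx_D.
      have := hortho i; rewrite L2ip_f // => -[] H.
      apply: (eq_trans _ H); apply: eq_bigr => l _.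
      by rewrite mxE -mulrA [delta tt l * _]mulrC divfK // dn0.
    apply: big1 => k _.
    have := congr1 (fun A : 'cV[R]_m => A k 0) hy; rewrite /= UDw mxE => H.
    rewrite (_ : \sum_(j < s) U k j * cci g j = 0) ?scale0r //.
    apply: (eq_trans _ H); apply: eq_bigr => j _.
    by rewrite mxE -mulrA [delta tt j * _]mulrC divfK // dn0.
- case=> [[hs1 hs2 _] [hfo hxo hK' hKs hcomp']].
  split; first split => // i j.
  + have := hfo i j; rewrite L2ip_f // => -[] <-.
    by rewrite ip_mx_D; apply: eq_bigr => l _; rewrite ci_f; ring.
  split.
  + by move=> i j; rewrite ip_mx_M -!hxv; exact: hxo.
  + move=> i; apply/matrixP => k c; rewrite (ord1 c) UDw mxE.
    have H : \sum_(k < m) (\sum_(j < s) U k j * cci (f i) j) *: phi k =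
             \sum_(k < m) (sigma i * v i k 0) *: phi k.
      by rewrite -Kform2 // hK' hxv scaler_sumr; apply: eq_bigr => l _; rewrite scalerA.
    rewrite -(lin_eq _ _ H k); apply: eq_bigr => j _; rewrite ci_f; ring.
  + move=> i; rewrite adj; apply/matrixP => j c; rewrite (ord1 c) adjv -hxv mxE.
    have Hae : {ae mu, forall t, D t ->
      (ip (x i) (pod_u phi U tt t) = sigma i * f i t) /\
      (f i t = \sum_(l < s) w i l 0 * chi tt l t)}.
      have := @filterI _ _ (ae_filter_ringOfSetsType mu) _ _ (hKs i) (hfw i).
      apply: (@filterS _ _ (ae_filter_ringOfSetsType mu)) => t [H1 H2] Dt.
      by split; [apply: H1 | apply: H2].
    have [t [It [H1 H2]]] := @ae_point R T s tt ht0 htT htinc _ j (ltn_ord j) Hae.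
    have := H1; rewrite H2 (@ipC R X ip hip) ip_u_l.
    rewrite (@step_at R s tt htinc _ j t It).
    by rewrite -/(stp (fun l => w i l 0) t) (@step_at R s tt htinc _ j t It).
  + move=> y hy; pose g := stp (fun l => y l 0).
    have hg : L2 T g by apply: step_L2.
    have Kg : K g = 0.
      apply: hcomp' => // i; rewrite L2ip_f //.
      have E := hy i; rewrite ip_mx_D in E.
      rewrite (_ : \sum_(l < s) w i l 0 * cci g l = 0) //; apply: eq_trans _ E.
      by apply: eq_bigr => l _; rewrite /g (@ci_step R T s tt ht0 htT htinc); ring.
    apply/matrixP => k c; rewrite (ord1 c) UDw mxE.
    have H : \sum_(k < m) (\sum_(j < s) U k j * cci g j) *: phi k =
             \sum_(k < m) 0 *: phi k.
      by rewrite -Kform2 // Kg big1 // => k' _; rewrite scale0r.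
    apply: eq_trans (lin_eq _ _ H k); apply: eq_bigr => j _; rewrite /g (@ci_step R T s tt ht0 htT htinc); ring.
Qed.

End Main.

Theorem proposition3p1 (R : realType) (X : lmodType R) (ip : X -> X -> R)
  (HX : is_real_separable_hilbert ip)
  (T : R) (hT : 0 < T) (s : nat) (tt : nat -> R)
  (ht0 : tt 0%N = 0) (htT : tt s = T)
  (htinc : forall j, (j < s)%N -> tt j < tt j.+1)
  (m : nat) (phi : 'I_m -> X) (hphi : lin_indep phi)
  (M : 'M[R]_m) (hM : forall j k, M j k = ip (phi j) (phi k))
  (U : 'M[R]_(m, s))
  (K : (R -> R) -> X)
  (hK : forall g, L2 T g -> forall y : X,
          ip (K g) y = Rintegral (@lebesgue_measure R) `]0, T[%classic
                         (fun t => ip (pod_u phi U tt t) y * g t))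
  (r : nat) (sigma : 'I_r -> R) (w : 'I_r -> 'cV[R]_s) (v : 'I_r -> 'cV[R]_m)
  (f : 'I_r -> R -> R) (x : 'I_r -> X)
  (hf : forall i, L2 T (f i))
  (hxv : forall i, x i = \sum_(k < m) v i k 0 *: phi k)
  (hwf : forall i (j : 'I_s), w i j 0 = Rintegral (@lebesgue_measure R) `]0, T[%classic
                         (fun t => (delta tt j)^-1 * chi tt j t * f i t))
  (hfw : forall i, {ae @lebesgue_measure R, forall t, `]0, T[%classic t ->
                     f i t = \sum_(l < s) w i l 0 * chi tt l t}) :
  core_svd_mx M (Delta tt s) (U *m Delta tt s) sigma w v <->
  core_svd_L2X ip T K (fun y t => ip y (pod_u phi U tt t)) sigma f x.
Proof. by apply: main_equiv; eassumption. Qed.
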